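(* Let $\mathcal{H}$ be a finite-dimensional Hilbert space, $\mathcal{O}\in\mathcal{L}(\mathcal{H})$ Hermitian, $\rho$ a quantum state on $\mathcal{H}$, $n\geq1$ and $1\leq k\leq n$. Let \[T_k=\frac{1}{2\lfloor n/k\rfloor}\sum_{i=0}^{\lfloor n/k\rfloor-1}\left(A_i+A_i^\dagger\right),\] where $A_i=U_{s_{J_i}}\,\big(I^{\otimes ik}\otimes\mathcal{O}\otimes I^{\otimes n-ik-1}\big)$ and $J_i=(ik+1,\ldots,ik+k)$. Then $\mathbf{Var}[T_k]\leq \dfrac{2k\|\mathcal{O}\|^2}{n}$, where $\|\mathcal{O}\|$ is the operator norm.
   Context: For $\pi$ in the symmetric group $\mathfrak{S}_n$, $U_\pi$ is the unitary on $\mathcal{H}^{\otimes n}$ with $U_\pi\ket{\psi_1}\cdots\ket{\psi_n}=\ket{\psi_{\pi^{-1}(1)}}\cdots\ket{\psi_{\pi^{-1}(n)}}$. For a sequence $J=(j_1,\ldots,j_l)$ of distinct elements of $\{1,\ldots,n\}$, $s_J\in\mathfrak{S}_n$ maps $j_t\mapsto j_{t+1}$ for $t<l$, $j_l\mapsto j_1$, and fixes all other elements. For a Hermitian $\mathcal{Q}$ on $\mathcal{H}^{\otimes n}$, $\mathbf{Var}[\mathcal{Q}]=\operatorname{tr}(\mathcal{Q}^2\rho^{\otimes n})-\operatorname{tr}(\mathcal{Q}\rho^{\otimes n})^2$. *)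

(* Defs.v *)
From HB Require Import structures.
From mathcomp Require Import all_boot all_order all_algebra all_fingroup.
From mathcomp Require Import boolp classical_sets reals.
From mathcomp Require Import complex.
Set Implicit Arguments. Unset Strict Implicit. Unset Printing Implicit Defensive.
Import Order.TTheory GRing.Theory Num.Theory.
Local Open Scope ring_scope.

(* Convention: H = C^d with C = R[i] (complex numbers over a realType R).
   H^{(x)n} has the orthonormal product basis e_x = |x_1> ... |x_n>, indexed by
   x : {ffun 'I_n -> 'I_d}; operators on H^{(x)n} are square matrices of
   size #|{ffun 'I_n -> 'I_d}| (= d^n), the basis vector of row/column index i
   being e_(enum_val i).  Sites are 0-indexed: the paper's site j is our j-1. *)

Section QDefs.
Variable R : realType.
Local Notation C := R[i].

Definition tidx (d n : nat) := {ffun 'I_n -> 'I_d}.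
Definition tdim (d n : nat) : nat := #|{: tidx d n}|.

Definition adjmx m p (A : 'M[C]_(m, p)) : 'M[C]_(p, m) :=
  (map_mx (@conjc R) A)^T.

Definition vnorm2 m (v : 'cV[C]_m) : R :=
  \sum_(i < m) (complex.Re (v i 0) ^+ 2 + complex.Im (v i 0) ^+ 2).
Definition vnorm m (v : 'cV[C]_m) : R := Num.sqrt (vnorm2 v).

Definition opnorm m (A : 'M[C]_m) : R :=
  reals.sup [set r : R | exists v : 'cV[C]_m, vnorm v = 1 /\ r = vnorm (A *m v)]%classic.

Definition is_hermitian m (A : 'M[C]_m) : Prop := adjmx A = A.

Definition psd m (A : 'M[C]_m) : Prop :=
  forall v : 'cV[C]_m, 0 <= (adjmx v *m (A *m v)) 0 0.

Definition is_state m (rho : 'M[C]_m) : Prop :=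
  is_hermitian rho /\ psd rho /\ \tr rho = 1.

Definition tens d n (A : 'I_n -> 'M[C]_d) : 'M[C]_(tdim d n) :=
  \matrix_(i, j) \prod_(t < n)
     A t ((enum_val i : tidx d n) t) ((enum_val j : tidx d n) t).

(* U_pi |psi_1 ... psi_n> = |psi_(pi^-1 1) ... psi_(pi^-1 n)>, i.e. on the
   product basis U_pi e_y = e_(y o pi^-1):  <e_x|U_pi|e_y> = [x o pi == y]. *)
Definition Uperm d n (pi : {perm 'I_n}) : 'M[C]_(tdim d n) :=
  \matrix_(i, j) ([forall t : 'I_n,
     (enum_val i : tidx d n) (pi t) == (enum_val j : tidx d n) t])%:R.

Definition Var d n (rho : 'M[C]_d) (Q : 'M[C]_(tdim d n)) : C :=
  let rhon := @tens d n (fun _ : 'I_n => rho) in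
  \tr (Q *m Q *m rhon) - (\tr (Q *m rhon)) ^+ 2.
End QDefs.

(* the cycle s_J for a sequence J of distinct elements: j_t |-> j_(t+1),
   j_l |-> j_1, other elements fixed.  This is exactly path.next. *)
Lemma sJ_inj n (J : seq 'I_n) : uniq J -> injective (next J).
Proof. by move=> uJ x y /(congr1 (prev J)); rewrite !prev_next. Qed.

Definition sJ n (J : seq 'I_n) (uJ : uniq J) : {perm 'I_n} := perm (sJ_inj uJ).

(* J_i = (ik+1, ..., ik+k) (paper, 1-indexed) = (ik, ..., ik+k-1) 0-indexed;
   entries >= n are dropped (never happens for i < n %/ k). *)
Definition Jblock n k i : seq 'I_n := pmap insub (iota (i * k) k).

Lemma Jblock_uniq n k i : uniq (@Jblock n k i).
Proof. by rewrite pmap_sub_uniq // iota_uniq. Qed.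

Section Tk.
Variable R : realType.
Local Notation C := R[i].

Definition Oat d n (O : 'M[C]_d) (p : nat) : 'M[C]_(tdim d n) :=
  tens (fun t : 'I_n => if val t == p then O else 1%:M).

Definition Ablk d n k (O : 'M[C]_d) i : 'M[C]_(tdim d n) :=
  @Uperm R d n (sJ (@Jblock_uniq n k i)) *m @Oat d n O (i * k).

Definition Tk d n k (O : 'M[C]_d) : 'M[C]_(tdim d n) :=
  (2 * (n %/ k)%:R)^-1 *:
    \sum_(i < n %/ k) (@Ablk d n k O i + adjmx (@Ablk d n k O i)).
End Tk.

(* Main.v *)
Require Import Defs.
From HB Require Import structures.
From mathcomp Require Import all_boot all_order all_algebra all_fingroup.
From mathcomp Require Import boolp classical_sets reals complex sesquilinear spectral.
From mathcomp Require Import ring.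
Import Order.TTheory GRing.Theory Num.Theory.
Local Open Scope ring_scope.
Set Implicit Arguments. Unset Strict Implicit. Unset Printing Implicit Defensive.

Section G.
Variable R : realType.
Local Notation C := R[i].
Variables d n : nat.
Local Notation X := (tidx d n).
Local Notation N := (tdim d n).

Lemma sum_enum (F : X -> C) : \sum_(k < N) F (enum_val k) = \sum_(x : X) F x.
Proof.
rewrite (reindex (@enum_rank _)) /=; last first.
  by exists (@enum_val _ _) => x _; rewrite ?enum_rankK ?enum_valK.
by apply: eq_bigr => x _; rewrite enum_rankK.
Qed.

Definition Gm (p : {perm 'I_n}) (E : 'I_n -> 'M[C]_d) : 'M[C]_N :=
  \matrix_(i, j) \prod_(t < n) E t ((enum_val i : X) (p t)) ((enum_val j : X) t).

Lemma Gm_mul p E q F :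
  Gm p E *m Gm q F = Gm (q * p) (fun t => E (q t) *m F t).
Proof.
apply/matrixP => i j; rewrite !mxE.
under eq_bigr do rewrite !mxE.
set x := enum_val i; set y := enum_val j.
rewrite (sum_enum (fun z : X => (\prod_t E t (x (p t)) (z t)) *
    \prod_t F t (z (q t)) (y t))) /=.
rewrite (eq_bigr (fun z : X => \prod_t (E (q t) (x (p (q t))) (z (q t)) * F t (z (q t)) (y t)))); last first.
  by move=> z _; rewrite (reindex_inj (@perm_inj _ q)) -big_split.
rewrite (reindex_inj (h := fun w : X => [ffun t => w ((q^-1)%g t)])); last first.
  move=> w1 w2 /ffunP H; apply/ffunP => t; have := H (q t).
  by rewrite !ffunE permK.
under eq_bigr => w _ do (under eq_bigr => t _ do rewrite !ffunE permK).
rewrite -(bigA_distr_bigA (fun t a => E (q t) (x (p (q t))) a * F t a (y t))) /=.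
by apply: eq_bigr => t _; rewrite mxE permM.
Qed.

Lemma adjmxE m q (A : 'M[C]_(m, q)) i j : adjmx A i j = (A j i)^*.
Proof. by rewrite /adjmx !mxE. Qed.

Lemma Gm_adj p E : adjmx (Gm p E) = Gm p^-1 (fun t => adjmx (E ((p^-1)%g t))).
Proof.
apply/matrixP => i j; rewrite adjmxE !mxE rmorph_prod.
rewrite [RHS](reindex_inj (@perm_inj _ p)) /=.
by apply: eq_bigr => t _; rewrite permK adjmxE.
Qed.

Lemma tens_Gm (A : 'I_n -> 'M[C]_d) : tens A = Gm 1 A.
Proof. by apply/matrixP => i j; rewrite !mxE; apply: eq_bigr => t _; rewrite perm1. Qed.

Lemma Uperm_Gm p E : Uperm R d p *m Gm 1 E = Gm p E.
Proof.
apply/matrixP => i j; rewrite !mxE.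
under eq_bigr do rewrite !mxE.
set x := enum_val i; set y := enum_val j.
rewrite (sum_enum (fun z : X => [forall t, x (p t) == z t]%:R *
    \prod_t E t (z ((1 : {perm 'I_n})%g t)) (y t))) /=.
rewrite (bigD1 [ffun t => x (p t)]) //= [X in _ + X]big1; last first.
  move=> z /eqP nz; case: (boolP [forall t, x (p t) == z t]) => [/forallP H|_]; last by rewrite mul0r.
  by case: nz; apply/ffunP => t; rewrite ffunE (eqP (H t)).
rewrite addr0; case: (boolP [forall t, _]) => [_|/forallP[]]; last by move=> t; rewrite ffunE.
by rewrite mul1r; apply: eq_bigr => t _; rewrite perm1 ffunE.
Qed.

Lemma Gm_tr p E rho :
  \tr (Gm p E *m Gm 1 (fun _ => rho)) = \sum_(x : X) \prod_t (E t *m rho) (x (p t)) (x t).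
Proof.
rewrite Gm_mul mul1g /mxtrace.
rewrite -(sum_enum (fun x : X => \prod_t (E t *m rho) (x (p t)) (x t))).
by apply: eq_bigr => k _; rewrite mxE; apply: eq_bigr => t _; rewrite perm1.
Qed.

Lemma sum_diag (rho : 'M[C]_d) :
  \sum_(x : X) \prod_(t < n) rho (x t) (x t) = (\tr rho) ^+ n.
Proof.
rewrite -(bigA_distr_bigA (fun (t : 'I_n) a => rho a a)) /=.
by rewrite prodr_const card_ord.
Qed.

Lemma decouple_sum (S : {set 'I_n}) (p p1 p2 : {perm 'I_n}) (H H1 H2 : 'I_n -> 'M[C]_d) rho :
  \tr rho = 1 ->
  (forall t, t \notin S -> p1 t = t /\ H1 t = rho) ->
  (forall t, t \in S -> p2 t = t /\ H2 t = rho) ->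
  (forall t, t \in S -> p t = p1 t /\ H t = H1 t) ->
  (forall t, t \notin S -> p t = p2 t /\ H t = H2 t) ->
  \sum_(x : X) \prod_t H t (x (p t)) (x t) =
  (\sum_(x : X) \prod_t H1 t (x (p1 t)) (x t)) * (\sum_(x : X) \prod_t H2 t (x (p2 t)) (x t)).
Proof.
move=> tr1 h1 h2 hS hN.
have p1S t : t \in S -> p1 t \in S.
  move=> tS; apply/negP => /negP nS; have [e _] := h1 _ nS.
  by move: nS; rewrite (perm_inj e) tS.
have p2N t : t \notin S -> p2 t \notin S.
  move=> tS; apply/negP => nS; have [e _] := h2 _ nS.
  by move: nS; rewrite (perm_inj e) (negbTE tS).
have D1 : \sum_(x : X) \prod_(t < n) rho (x t) (x t) = 1 by rewrite sum_diag tr1 expr1n.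
transitivity ((\sum_(x : X) \prod_t H t (x (p t)) (x t)) * \sum_(x : X) \prod_(t < n) rho (x t) (x t)).
  by rewrite D1 mulr1.
rewrite mulr_suml.
under eq_bigr do rewrite mulr_sumr.
rewrite mulr_suml; under [RHS]eq_bigr do rewrite mulr_sumr.
rewrite !pair_bigA /=.
pose Phi (u : X * X) : X * X := ([ffun t => if t \in S then u.1 t else u.2 t],
   [ffun t => if t \in S then u.2 t else u.1 t]).
have PhiK : involutive Phi.
  by case=> a b; rewrite /Phi /=; congr pair; apply/ffunP => t; rewrite !ffunE; case: (t \in S).
rewrite [RHS](reindex_inj (inv_inj PhiK)) /=.
apply: eq_bigr => -[y y'] _ /=; rewrite -!big_split /=.
apply: eq_bigr => t _; rewrite !ffunE.
case: (boolP (t \in S)) => tS.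
  have [-> ->] := hS t tS; have [-> ->] := h2 t tS.
  by rewrite (p1S t tS) tS.
have [-> ->] := hN t tS; have [-> ->] := h1 t tS.
by rewrite (negbTE (p2N t tS)) (negbTE tS) mulrC.
Qed.

Definition Ex (rho : 'M[C]_d) (M : 'M[C]_N) := \tr (M *m tens (fun _ : 'I_n => rho)).

Definition Local (S : {set 'I_n}) (M : 'M[C]_N) := exists p E,
  M = Gm p E /\ (forall t, t \notin S -> p t = t /\ E t = 1%:M).

Lemma Ex_Gm rho p E :
  Ex rho (Gm p E) = \sum_(x : X) \prod_t (E t *m rho) (x (p t)) (x t).
Proof. by rewrite /Ex tens_Gm Gm_tr. Qed.

Lemma perm_stable (p : {perm 'I_n}) (A : {set 'I_n}) :
  (forall t, t \notin A -> p t = t) -> forall t, t \in A -> p t \in A.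
Proof.
move=> h t tA; apply/negP => /negP nA; have e := h _ nA.
by move: nA; rewrite (perm_inj e) tA.
Qed.

Lemma Ex_decouple rho S M1 M2 : \tr rho = 1 -> Local S M1 -> Local (~: S) M2 ->
  Ex rho (M1 *m M2) = Ex rho M1 * Ex rho M2.
Proof.
move=> tr1 [p1 [E1 [-> h1]]] [p2 [E2 [-> h2]]].
have h2' t : t \in S -> p2 t = t /\ E2 t = 1%:M by move=> tS; apply: h2; rewrite inE tS.
have p2N t : t \notin S -> p2 t \notin S.
  move=> tS; have := @perm_stable p2 (~: S) (fun t ht => (h2 t ht).1) t.
  by rewrite !inE; apply.
rewrite Gm_mul !Ex_Gm.
apply: (decouple_sum (S := S) (rho := rho)) => // t tS.
- by have [-> ->] := h1 t tS; rewrite mul1mx.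
- by have [-> ->] := h2' t tS; rewrite mul1mx.
- by have [e1 ->] := h2' t tS; rewrite permM e1 mulmx1.
have [e1 _] := h1 _ (p2N t tS).
have [_ e2] := h1 _ (p2N t tS).
by rewrite permM e1 e2 mul1mx.
Qed.

Lemma Local_sub (S S' : {set 'I_n}) M : S \subset S' -> Local S M -> Local S' M.
Proof.
move=> sub [p [E [-> h]]]; exists p, E; split => // t tS; apply: h.
by apply: contra tS; apply: (fintype.subsetP sub).
Qed.

Lemma ExD rho A B : Ex rho (A + B) = Ex rho A + Ex rho B.
Proof. by rewrite /Ex mulmxDl mxtraceD. Qed.

Lemma ExN rho A : Ex rho (- A) = - Ex rho A.
Proof. by rewrite /Ex mulNmx linearN. Qed.

Lemma ExZ rho c A : Ex rho (c *: A) = c * Ex rho A.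
Proof. by rewrite /Ex -scalemxAl mxtraceZ. Qed.

Lemma Ex_sum rho I (r : seq I) (P : pred I) (F : I -> 'M[C]_N) :
  Ex rho (\sum_(i <- r | P i) F i) = \sum_(i <- r | P i) Ex rho (F i).
Proof.
elim/big_rec2: _ => [|i y M _ <-]; first by rewrite /Ex mul0mx mxtrace0.
by rewrite ExD.
Qed.

End G.

Section Adj.
Variable R : realType.
Local Notation C := R[i].

Lemma adjmxE' m q (A : 'M[C]_(m, q)) i j : adjmx A i j = (A j i)^*.
Proof. by rewrite /adjmx !mxE. Qed.

Lemma adjmxK m q (A : 'M[C]_(m, q)) : adjmx (adjmx A) = A.
Proof. by apply/matrixP => i j; rewrite !adjmxE' conjCK. Qed.

Lemma adjmx_mul m q r (A : 'M[C]_(m, q)) (B : 'M[C]_(q, r)) :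
  adjmx (A *m B) = adjmx B *m adjmx A.
Proof.
apply/matrixP => i j; rewrite adjmxE' !mxE rmorph_sum; apply: eq_bigr => k _.
by rewrite !adjmxE' rmorphM mulrC.
Qed.

Lemma adjmxD m q (A B : 'M[C]_(m, q)) : adjmx (A + B) = adjmx A + adjmx B.
Proof. by apply/matrixP => i j; rewrite [RHS]mxE !adjmxE' mxE rmorphD. Qed.

Lemma adjmxN m q (A : 'M[C]_(m, q)) : adjmx (- A) = - adjmx A.
Proof. by apply/matrixP => i j; rewrite [RHS]mxE !adjmxE' mxE rmorphN. Qed.

Lemma adjmxZ m q c (A : 'M[C]_(m, q)) : adjmx (c *: A) = c^* *: adjmx A.
Proof. by apply/matrixP => i j; rewrite [RHS]mxE !adjmxE' mxE rmorphM. Qed.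

Lemma adjmx1 m : adjmx (1%:M : 'M[C]_m) = 1%:M.
Proof. by apply/matrixP => i j; rewrite adjmxE' !mxE rmorph_nat eq_sym. Qed.

Lemma adjmx_sum m q I (r : seq I) (P : pred I) (F : I -> 'M[C]_(m, q)) :
  adjmx (\sum_(i <- r | P i) F i) = \sum_(i <- r | P i) adjmx (F i).
Proof.
elim/big_rec2: _ => [|i y M _ <-].
  by apply/matrixP => i j; rewrite adjmxE' !mxE conjC0.
by rewrite adjmxD.
Qed.

Lemma tr_adj m (A : 'M[C]_m) : \tr (adjmx A) = (\tr A)^*.
Proof. by rewrite /mxtrace rmorph_sum; apply: eq_bigr => i _; rewrite adjmxE'. Qed.

Lemma tr_adj_ge0 m q (Z : 'M[C]_(m, q)) : 0 <= \tr (adjmx Z *m Z).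
Proof.
apply: sumr_ge0 => j _; rewrite mxE; apply: sumr_ge0 => i _.
by rewrite adjmxE' mulrC mul_conjC_ge0.
Qed.

End Adj.

Section Fact.
Variable R : realType.
Local Notation C := R[i].
Variables d n : nat.
Local Notation N := (tdim d n).

Lemma tens_fact (V : 'M[C]_d) :
  tens (fun _ : 'I_n => V *m adjmx V) =
  tens (fun _ : 'I_n => V) *m adjmx (tens (fun _ : 'I_n => V)).
Proof.
rewrite !tens_Gm Gm_adj Gm_mul invg1 mul1g; congr Gm.
Qed.

Lemma Ex_fact (V : 'M[C]_d) (M : 'M[C]_N) :
  Ex (V *m adjmx V) M =
  \tr (adjmx (tens (fun _ : 'I_n => V)) *m (M *m tens (fun _ : 'I_n => V))).
Proof. by rewrite /Ex tens_fact mulmxA mxtrace_mulC. Qed.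

Lemma Ex_ge0 (V : 'M[C]_d) (Y : 'M[C]_N) : 0 <= Ex (V *m adjmx V) (adjmx Y *m Y).
Proof. by rewrite Ex_fact -mulmxA mulmxA -adjmx_mul tr_adj_ge0. Qed.

Lemma Ex_herm (V : 'M[C]_d) (M : 'M[C]_N) : adjmx M = M ->
  (Ex (V *m adjmx V) M)^* = Ex (V *m adjmx V) M.
Proof.
by move=> hM; rewrite Ex_fact -tr_adj !adjmx_mul adjmxK hM mulmxA.
Qed.

End Fact.

Section RhoFact.
Variable R : realType.
Local Notation C := R[i].

Lemma adjmx_t m q (A : 'M[C]_(m, q)) : adjmx A = (A ^t Num.conj)%sesqui.
Proof. by rewrite /adjmx map_trmx. Qed.

Lemma adj_diag m (s : 'rV[C]_m) : adjmx (diag_mx s) = diag_mx (\row_j (s 0 j)^*).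
Proof.
apply/matrixP => i j; rewrite adjmxE' !mxE eq_sym.
by case: eqP => [->|_]; rewrite ?mulr1n ?mulr0n ?conjC0.
Qed.

Lemma rho_fact d (rho : 'M[C]_d) : is_hermitian rho -> psd rho ->
  exists V : 'M[C]_d, rho = V *m adjmx V.
Proof.
move=> hr pr.
have nr : rho \is normalmx by apply/eqP; rewrite -adjmx_t hr.
have /orthomx_spectralP hsp := nr.
set P := spectralmx rho in hsp; set D := spectral_diag rho in hsp.
have Pu : P \is unitarymx := spectral_unitarymx rho.
have PPa : P *m adjmx P = 1%:M by rewrite adjmx_t; apply/unitarymxP.
have PaP : adjmx P *m P = 1%:M by apply: mulmx1C.
have iP : invmx P = adjmx P by rewrite invmx_unitary // adjmx_t.
rewrite iP in hsp.
have Dge0 j : 0 <= D 0 j.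
  have := pr (adjmx (row j P)).
  have -> : (adjmx (adjmx (row j P)) *m (rho *m adjmx (row j P))) 0 0 =
     (P *m rho *m adjmx P) j j.
    rewrite adjmxK mulmxA -row_mul !mxE; apply: eq_bigr => k _.
    by rewrite /adjmx !mxE.
  by rewrite hsp !mulmxA PPa mul1mx -mulmxA PPa mulmx1 mxE eqxx mulr1n.
exists (adjmx P *m diag_mx (\row_j sqrtC (D 0 j))).
rewrite adjmx_mul adjmxK adj_diag hsp -!mulmxA; congr (_ *m _).
rewrite mulmxA mulmx_diag; congr (_ *m _); congr diag_mx.
by apply/rowP => j; rewrite !mxE geC0_conj ?sqrtC_ge0 // -expr2 sqrtCK.
Qed.

End RhoFact.

Section Opnorm.
Variable R : realType.
Local Notation C := R[i].

Definition qn m (v : 'cV[C]_m) : C := (adjmx v *m v) 0 0.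

Lemma normc_sq (z : C) : ((complex.Re z) ^+ 2 + (complex.Im z) ^+ 2)%:C%C = `|z| ^+ 2.
Proof. exact: add_Re2_Im2. Qed.

Lemma qn_vnorm2 m (v : 'cV[C]_m) : qn v = (vnorm2 v)%:C%C.
Proof.
rewrite /qn /vnorm2 mxE rmorph_sum; apply: eq_bigr => i _.
transitivity (`|v i 0| ^+ 2); last exact: (esym (normc_sq (v i 0))).
by rewrite sqr_normc adjmxE' mulrC.
Qed.

Lemma qn_norm m (v : 'cV[C]_m) : qn v = \sum_i `|v i 0| ^+ 2.
Proof.
by rewrite qn_vnorm2 /vnorm2 rmorph_sum; apply: eq_bigr => i _; exact: normc_sq.
Qed.

Lemma vnorm2_ge0 m (v : 'cV[C]_m) : 0 <= vnorm2 v.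
Proof. by apply: sumr_ge0 => i _; rewrite addr_ge0 ?sqr_ge0. Qed.

Lemma vnorm2_scale m (a : R) (v : 'cV[C]_m) : vnorm2 (a%:C%C *: v) = a ^+ 2 * vnorm2 v.
Proof.
rewrite /vnorm2 mulr_sumr; apply: eq_bigr => i _; rewrite mxE.
by case: (v i 0) => x y /=; rewrite !mul0r !subr0 !addr0 !exprMn mulrDr.
Qed.

Lemma vnorm_sq m (v : 'cV[C]_m) : vnorm v ^+ 2 = vnorm2 v.
Proof. by rewrite /vnorm sqr_sqrtr // vnorm2_ge0. Qed.

Lemma vnorm_ge0 m (v : 'cV[C]_m) : 0 <= vnorm v.
Proof. exact: sqrtr_ge0. Qed.

Lemma qn_ge0 m (v : 'cV[C]_m) : 0 <= qn v.
Proof. by rewrite qn_norm; apply: sumr_ge0 => i _; rewrite exprn_ge0. Qed.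

Lemma vnorm2_eq0 m (v : 'cV[C]_m) : vnorm2 v = 0 -> v = 0.
Proof.
move=> h; have : qn v = 0 by rewrite qn_vnorm2 h.
rewrite qn_norm => /psumr_eq0P h2; apply/matrixP => i j; rewrite ord1 mxE.
have /eqP := h2 (fun k _ => exprn_ge0 2 (normr_ge0 _)) i isT.
by rewrite sqrf_eq0 normr_eq0 => /eqP.
Qed.

Lemma vnorm2_0 m : vnorm2 (0 : 'cV[C]_m) = 0.
Proof. by rewrite /vnorm2 big1 // => i _; rewrite mxE /= expr0n /= addr0. Qed.

Definition nz (z : C) : R := Num.sqrt (complex.Re z ^+ 2 + complex.Im z ^+ 2).

Lemma nzE (z : C) : (nz z)%:C%C = `|z|.
Proof. by rewrite normc_def. Qed.

Lemma opnorm_ub d (O : 'M[C]_d) (u : 'cV[C]_d) : vnorm u = 1 ->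
  vnorm (O *m u) <= Num.sqrt (\sum_i (\sum_j nz (O i j)) ^+ 2).
Proof.
move=> hu; have hu2 : vnorm2 u = 1 by rewrite -vnorm_sq hu expr1n.
rewrite /vnorm ler_sqrt; last by apply: sumr_ge0 => i _; exact: sqr_ge0.
rewrite -lecR -qn_vnorm2 qn_norm rmorph_sum /=; apply: ler_sum => i _.
rewrite rmorphXn rmorph_sum /=.
have uj j : `|u j 0| <= 1.
  have : `|u j 0| ^+ 2 <= 1.
    have : qn u = 1 by rewrite qn_vnorm2 hu2.
    rewrite qn_norm (bigD1 j) //= => e; rewrite -e lerDl.
    by apply: sumr_ge0 => k _; exact: exprn_ge0.
  by rewrite -{1}(expr1n _ 2) ler_pXn2r // nnegrE.
apply: lerXn2r; rewrite ?nnegrE //.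
- by apply: sumr_ge0 => j _; rewrite nzE.
rewrite mxE; apply: le_trans (ler_norm_sum _ _ _) _; apply: ler_sum => j _.
by rewrite nzE normrM -{2}(mulr1 `|O i j|) ler_wpM2l.
Qed.

Lemma opnorm_bound d (O : 'M[C]_d) (v : 'cV[C]_d) :
  vnorm2 (O *m v) <= opnorm O ^+ 2 * vnorm2 v.
Proof.
have [h0|hn] := eqVneq (vnorm2 v) 0.
  by rewrite (vnorm2_eq0 h0) mulmx0 !vnorm2_0 mulr0.
have nvp : 0 < vnorm v.
  by rewrite /vnorm sqrtr_gt0 lt_def hn vnorm2_ge0.
set u := ((vnorm v)^-1)%:C%C *: v.
have vu : v = (vnorm v)%:C%C *: u.
  by rewrite /u scalerA -rmorphM mulfV ?gt_eqF // scale1r.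
have hu : vnorm u = 1.
  rewrite /vnorm /u vnorm2_scale -vnorm_sq exprVn mulVf ?sqrtr1 //.
  by rewrite expf_neq0 // gt_eqF.
rewrite /opnorm; set S := (X in reals.sup X).
have hs : has_sup S.
  split; first by exists (vnorm (O *m u)); exists u.
  exists (Num.sqrt (\sum_i (\sum_j nz (O i j)) ^+ 2)) => r [w [hw ->]].
  exact: opnorm_ub.
have le1 : vnorm (O *m u) <= opnorm O.
  by apply: sup_upper_bound => //; exists u.
have e : vnorm2 (O *m v) = vnorm v ^+ 2 * vnorm (O *m u) ^+ 2.
  by rewrite {1}vu -scalemxAr (vnorm2_scale (vnorm v) (O *m u)) !vnorm_sq.
rewrite e -(vnorm_sq v) mulrC ler_wpM2r ?exprn_ge0 ?vnorm_ge0 //.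
by rewrite lerXn2r // nnegrE ?vnorm_ge0 // (le_trans (vnorm_ge0 _) le1).
Qed.

End Opnorm.

Section Single.
Variable R : realType.
Local Notation C := R[i].

Lemma tr_adj_qn m q (Z : 'M[C]_(m, q)) : \tr (adjmx Z *m Z) = \sum_j qn (col j Z).
Proof.
apply: eq_bigr => j _; rewrite /qn !mxE; apply: eq_bigr => i _.
by rewrite !adjmxE' !mxE.
Qed.

Lemma single_bound d (O V : 'M[C]_d) : is_hermitian O -> \tr (V *m adjmx V) = 1 ->
  \tr (O *m O *m (V *m adjmx V)) <= ((opnorm O) ^+ 2)%:C%C.
Proof.
move=> hO tr1.
have -> : \tr (O *m O *m (V *m adjmx V)) = \tr (adjmx (O *m V) *m (O *m V)).
  by rewrite adjmx_mul hO mulmxA mxtrace_mulC !mulmxA.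
rewrite tr_adj_qn -[X in _ <= X]mulr1 -tr1 mxtrace_mulC tr_adj_qn mulr_sumr.
apply: ler_sum => j _; rewrite colE -mulmxA -colE !qn_vnorm2 -rmorphM lecR.
exact: opnorm_bound.
Qed.

End Single.

Section Blocks.
Variable R : realType.
Local Notation C := R[i].
Variables (d n k : nat) (O : 'M[C]_d).
Hypothesis hk : (0 < k)%N.
Local Notation N := (tdim d n).

Definition Eb (i : nat) (t : 'I_n) : 'M[C]_d := if val t == (i * k)%N then O else 1%:M.
Definition pb (i : nat) : {perm 'I_n} := sJ (@Jblock_uniq n k i).
Definition Sb (i : nat) : {set 'I_n} := [set t : 'I_n | (i * k <= t < i * k + k)%N].

Lemma Ablk_Gm i : Ablk n k O i = Gm (pb i) (Eb i).
Proof. by rewrite /Ablk /Oat tens_Gm Uperm_Gm. Qed.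

Lemma pb_fix i t : t \notin Sb i -> pb i t = t.
Proof.
move=> tS; rewrite /pb /sJ permE next_nth.
by rewrite /Jblock mem_pmap_sub mem_iota; move: tS; rewrite inE => /negbTE ->.
Qed.

Lemma Eb_fix i t : t \notin Sb i -> Eb i t = 1%:M.
Proof.
move=> tS; rewrite /Eb; case: eqP => // e; move: tS; rewrite inE e leqnn /=.
by rewrite -{1}(addn0 (i * k)%N) ltn_add2l hk.
Qed.

Lemma pbV_fix i t : t \notin Sb i -> ((pb i)^-1)%g t = t.
Proof. by move=> tS; apply: (@perm_inj _ (pb i)); rewrite permKV pb_fix. Qed.

Lemma Local_A i : Local (Sb i) (Ablk n k O i).
Proof. by exists (pb i), (Eb i); rewrite Ablk_Gm; split => // t tS; rewrite pb_fix ?Eb_fix. Qed.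

Lemma Local_adjA i : Local (Sb i) (adjmx (Ablk n k O i)).
Proof.
exists ((pb i)^-1)%g, (fun t => adjmx (Eb i (((pb i)^-1)%g t))).
by rewrite Ablk_Gm Gm_adj; split => // t tS; rewrite pbV_fix // Eb_fix // adjmx1.
Qed.

Lemma Sb_disj i j : i != j -> Sb j \subset ~: Sb i.
Proof.
move=> ij; apply/fintype.subsetP => t; rewrite !inE => /andP [a b]; apply/negP => /andP [c e].
case: (ltngtP i j) ij => // hij _.
- have : (i * k + k <= j * k)%N by rewrite -mulSnr leq_mul2r hij orbT.
  by move=> h; move: e; rewrite ltnNge (leq_trans h a).
- have : (j * k + k <= i * k)%N by rewrite -mulSnr leq_mul2r hij orbT.
  by move=> h; move: b; rewrite ltnNge (leq_trans h c).
Qed.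

Lemma Ex_decouple2 rho (S : {set 'I_n}) (A1 A2 B1 B2 : 'M[C]_N) : \tr rho = 1 ->
  Local S A1 -> Local S A2 -> Local (~: S) B1 -> Local (~: S) B2 ->
  Ex rho ((A1 + A2) *m (B1 + B2)) = Ex rho (A1 + A2) * Ex rho (B1 + B2).
Proof.
move=> tr1 L1 L2 L3 L4.
rewrite mulmxDl !mulmxDr !ExD (Ex_decouple tr1 L1 L3) (Ex_decouple tr1 L1 L4).
rewrite (Ex_decouple tr1 L2 L3) (Ex_decouple tr1 L2 L4).
by rewrite mulrDl !mulrDr !addrA.
Qed.

Definition Cb i := Ablk n k O i + adjmx (Ablk n k O i).

Lemma Ex_Cb_decouple rho i j : \tr rho = 1 -> i != j ->
  Ex rho (Cb i *m Cb j) = Ex rho (Cb i) * Ex rho (Cb j).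
Proof.
move=> tr1 ij.
have L1 := Local_A i; have L2 := Local_adjA i.
have L3 := Local_sub (Sb_disj ij) (Local_A j).
have L4 := Local_sub (Sb_disj ij) (Local_adjA j).
exact: (Ex_decouple2 tr1 L1 L2 L3 L4).
Qed.

Lemma Ex_Gm1 rho (F : 'I_n -> 'M[C]_d) t0 : \tr rho = 1 ->
  (forall t, t != t0 -> F t = 1%:M) -> Ex rho (Gm 1 F) = \tr (F t0 *m rho).
Proof.
move=> tr1 hF; rewrite Ex_Gm.
rewrite (eq_bigr (fun x : tidx d n => \prod_t (F t *m rho) (x t) (x t))); last first.
  by move=> x _; apply: eq_bigr => t _; rewrite perm1.
rewrite -(bigA_distr_bigA (fun t a => (F t *m rho) a a)) /=.
rewrite (bigD1 t0) //= [X in _ * X]big1 ?mulr1 // => t /hF ->.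
by rewrite mul1mx.
Qed.

Lemma Ex_AAd rho i (hi : (i * k < n)%N) : \tr rho = 1 -> is_hermitian O ->
  Ex rho (Ablk n k O i *m adjmx (Ablk n k O i)) = \tr (O *m O *m rho).
Proof.
move=> tr1 hO; set p0 : 'I_n := Ordinal hi.
rewrite Ablk_Gm Gm_adj Gm_mul mulVg (Ex_Gm1 (t0 := pb i p0)) //.
  by rewrite permK /Eb eqxx hO.
move=> t ht; rewrite /Eb; case: eqP => e.
  by case/eqP: ht; rewrite -[t](permKV (pb i)); congr (pb i _); apply: val_inj.
by rewrite adjmx1 mulmx1.
Qed.

Lemma Ex_AdA rho i (hi : (i * k < n)%N) : \tr rho = 1 -> is_hermitian O ->
  Ex rho (adjmx (Ablk n k O i) *m Ablk n k O i) = \tr (O *m O *m rho).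
Proof.
move=> tr1 hO; set p0 : 'I_n := Ordinal hi.
rewrite Ablk_Gm Gm_adj Gm_mul mulgV (Ex_Gm1 (t0 := p0)) //.
  by rewrite permK /Eb eqxx hO.
move=> t ht; rewrite permK /Eb; case: eqP => e.
  by case/eqP: ht; apply: val_inj.
by rewrite adjmx1 mulmx1.
Qed.

End Blocks.

Section Main.
Variable R : realType.
Local Notation C := R[i].

Lemma Cb_bound d n k (O V : 'M[C]_d) i : (0 < k)%N -> (i * k < n)%N ->
  is_hermitian O -> \tr (V *m adjmx V) = 1 ->
  Ex (V *m adjmx V) (Cb n k O i *m Cb n k O i) - Ex (V *m adjmx V) (Cb n k O i) ^+ 2
  <= (4%:R * opnorm O ^+ 2)%:C%C.
Proof.
move=> hk hi hO tr1.
set rho := V *m adjmx V.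
set A := Ablk n k O i.
have ha : (Ex rho (Cb n k O i))^* = Ex rho (Cb n k O i).
  by apply: Ex_herm; rewrite /Cb adjmxD adjmxK addrC.
have a2 : 0 <= Ex rho (Cb n k O i) ^+ 2 by rewrite expr2 -{2}ha mul_conjC_ge0.
have hb : Ex rho (A *m adjmx A) <= (opnorm O ^+ 2)%:C%C.
  by rewrite Ex_AAd // single_bound.
have hc : Ex rho (adjmx A *m A) <= (opnorm O ^+ 2)%:C%C.
  by rewrite Ex_AdA // single_bound.
have hD := Ex_ge0 V (A - adjmx A).
rewrite adjmxD adjmxN adjmxK mulmxDl !mulmxDr !mulNmx !mulmxN !ExD !ExN in hD.
set z := Ex rho (Cb n k O i) in a2 *.
rewrite /Cb mulmxDl !mulmxDr !ExD.
set a := Ex rho (A *m A) in hD *; set b := Ex rho (A *m adjmx A) in hb hD *.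
set c := Ex rho (adjmx A *m A) in hc hD *.
set e := Ex rho (adjmx A *m adjmx A) in hD *.
have -> : a + b + (c + e) = 2%:R * b + 2%:R * c - (c - e + (- a - - b)).
  by rewrite !mulr2n !mulrDl !mul1r; ring.
rewrite -addrA; apply: le_trans (_ : _ <= 2%:R * b + 2%:R * c) _.
  by rewrite gerDl -opprD oppr_le0 addr_ge0.
have -> : (4%:R * opnorm O ^+ 2)%:C%C = 2%:R * (opnorm O ^+ 2)%:C%C + 2%:R * (opnorm O ^+ 2)%:C%C.
  by rewrite -mulrDl rmorphM /= rmorph_nat -natrD.
by rewrite lerD // ler_wpM2l // ler0n.
Qed.

End Main.

Unset Implicit Arguments.

Theorem lemma2p19 (R : realType) (d : nat) (O rho : 'M[R[i]]_d) (n k : nat) :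
  is_hermitian O -> is_state rho -> (1 <= n)%N -> (1 <= k)%N -> (k <= n)%N ->
  @Var R d n rho (@Tk R d n k O) <= real_complex R (2 * k%:R * opnorm O ^+ 2 / n%:R).
Proof.
move=> hO [hr [pr tr1]] hn hk hkn.
have [V hV] := rho_fact hr pr.
set m := (n %/ k)%N.
have m0 : (0 < m)%N by rewrite divn_gt0.
have hi (i : 'I_m) : (i * k < n)%N.
  have := ltn_ord i; rewrite -(ltn_pmul2r hk) => h.
  apply: leq_trans h _; exact: leq_divM.
change (Ex rho (Tk n k O *m Tk n k O) - Ex rho (Tk n k O) ^+ 2 <=
        real_complex R (2 * k%:R * opnorm O ^+ 2 / n%:R)).
have eT : Tk n k O = (2 * m%:R)^-1 *: \sum_(i < m) Cb n k O i by [].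
set c : R[i] := (2 * m%:R)^-1 in eT.
rewrite eT -scalemxAl -scalemxAr !ExZ mulmx_suml Ex_sum.
rewrite (eq_bigr (fun i : 'I_m => \sum_(j < m) Ex rho (Cb n k O i *m Cb n k O j))); last first.
  by move=> i _; rewrite mulmx_sumr Ex_sum.
rewrite Ex_sum.
set a := fun i : 'I_m => Ex rho (Cb n k O i).
have key : \sum_(i < m) \sum_(j < m) Ex rho (Cb n k O i *m Cb n k O j) - (\sum_(i < m) a i) ^+ 2
   = \sum_(i < m) (Ex rho (Cb n k O i *m Cb n k O i) - a i ^+ 2).
  rewrite expr2 mulr_suml -sumrB; apply: eq_bigr => i _.
  rewrite mulr_sumr -sumrB (bigD1 i) //= big1 ?addr0 ?expr2 // => j ji.
  rewrite /a hV (Ex_Cb_decouple _ _ hk) ?subrr //; first by rewrite -hV.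
  by apply: contra ji => /eqP e; apply/eqP/val_inj.
have -> : c * (c * \sum_(i < m) \sum_(j < m) Ex rho (Cb n k O i *m Cb n k O j)) -
   (c * \sum_(i < m) a i) ^+ 2 = c ^+ 2 * (\sum_(i < m) \sum_(j < m) Ex rho (Cb n k O i *m Cb n k O j) - (\sum_(i < m) a i) ^+ 2).
  by rewrite mulrBr exprMn mulrA -expr2.
rewrite key.
have hb : \sum_(i < m) (Ex rho (Cb n k O i *m Cb n k O i) - a i ^+ 2) <=
    \sum_(i < m) (4%:R * opnorm O ^+ 2)%:C%C.
  apply: ler_sum => i _; rewrite /a hV; apply: Cb_bound => //; by rewrite -hV.
apply: le_trans (ler_wpM2l (exprn_ge0 2 _) hb) _.
  by rewrite /c invr_ge0 mulr_ge0 // ler0n.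
rewrite sumr_const card_ord.
have ec : c = ((2 * m%:R)^-1 : R)%:C%C by rewrite /c fmorphV rmorphM /= !rmorph_nat.
rewrite ec -rmorphXn -rmorphMn -rmorphM lecR.
set o := opnorm O ^+ 2.
have o0 : 0 <= o by rewrite /o sqr_ge0.
have nk : (n <= 2 * k * m)%N.
  have := ltn_ceil n hk; rewrite -/m => h; apply: ltnW; apply: leq_trans h _.
  by rewrite mulnAC; apply: leq_mul => //; rewrite mul2n -addnn -addn1 leq_add2l.
have mR : (0 : R) < m%:R by rewrite ltr0n.
have nR : (0 : R) < n%:R by rewrite ltr0n.
have -> : (2 * m%:R)^-1 ^+ 2 * (4 * o *+ m) = o / m%:R :> R.
  by field; rewrite gt_eqF.
rewrite ler_pdivrMr // mulrAC ler_pdivlMr //.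
have -> : 2 * k%:R * o * m%:R = o * (2 * k * m)%:R :> R by rewrite !natrM; ring.
by rewrite ler_wpM2l // ler_nat.
Qed.
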